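(* Fix $2\le d\le 7$ and let $(a,b,c)$ be given by: $d=2$: $(0.5,0.7,0.27)$; $d=3$: $(0.4,0.6,0.2)$; $d=4$: $(0.3,0.5,0.1)$; $d=5$: $(0.3,0.4,0.1)$; $d=6$: $(0.27,0.32,0.1)$; $d=7$: $(0.26,0.27,0.01)$. Then $\|D\psi_x\|<0.99$ for all $x\in\mathcal{S}_{a,b,c}$.
   Context: $\psi$ acts on sequences $x=(x_n)_{n\ge1}$ with nonnegative entries by $\psi(x)_1=\big(\frac{1+x_1+x_1x_2}{1+2x_1}\big)^d$ and $\psi(x)_n=x_{n-1}^d\big(\frac{1+x_n+x_nx_{n+1}}{1+x_{n-1}+x_{n-1}x_n}\big)^d$ for $n\ge2$; here it is restricted to $\mathcal{R}$, the set of sequences of the form $x_i=z_i/z_{i-1}$ ($x_i=0$ if $z_{i-1}=0$), $i\ge1$, for $z$ a symmetric probability distribution on $\mathbb{Z}$ whose support is an interval or all of $\mathbb{Z}$. $\mathcal{S}_{a,b,c}:=\{x\in\mathcal{R}: a\le x_1\le b,\ 0\le x_n\le c\ \forall n\ge2\}$. $D\psi_x$ is the linear operator $(D\psi_x y)_i=\sum_{j\ge1}\frac{\partial\psi_i}{\partial x_j}(x)\,y_j$ (only $|i-j|\le1$ terms are nonzero). Sequences are normed by $\|y\|=\sup_{i\ge1}|y_i|$ if $d=2$ and $\|y\|=|y_1|+\sup_{i\ge2}|y_i|$ if $3\le d\le7$, and $\|D\psi_x\|=\sup_{\|y\|=1}\|D\psi_xy\|$ is the operator norm. *)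

(* Defs.v *)
From Stdlib Require Import Reals ZArith Lra.
From Coquelicot Require Import Coquelicot.
Open Scope R_scope.

(* Sequences x = (x_n)_{n>=1} are represented as nat -> R; index 0 is unused. *)

Definition sym_prob_interval (z : Z -> R) : Prop :=
  (forall k, 0 <= z k) /\
  (forall k, z (- k)%Z = z k) /\
  (exists s1 s2 : R,
      is_series (fun n : nat => z (Z.of_nat n)) s1 /\
      is_series (fun n : nat => z (- (Z.of_nat n + 1))%Z) s2 /\
      s1 + s2 = 1) /\
  (forall a b c : Z, (a < b < c)%Z -> 0 < z a -> 0 < z c -> 0 < z b).

Definition in_calR (x : nat -> R) : Prop :=
  exists z : Z -> R, sym_prob_interval z /\
    forall i : nat, (1 <= i)%nat ->
      x i = (if Req_EM_T (z (Z.of_nat i - 1)%Z) 0 then 0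
             else z (Z.of_nat i) / z (Z.of_nat i - 1)%Z).

Definition in_S (a b c : R) (x : nat -> R) : Prop :=
  in_calR x /\ a <= x 1%nat <= b /\
  (forall n : nat, (2 <= n)%nat -> 0 <= x n <= c).

Definition psi (d : nat) (x : nat -> R) (n : nat) : R :=
  match n with
  | O => 0
  | S O => ((1 + x 1%nat + x 1%nat * x 2%nat) / (1 + 2 * x 1%nat)) ^ d
  | S m => (x m) ^ d *
           ((1 + x n + x n * x (S n)) / (1 + x m + x m * x n)) ^ d
  end.

Definition upd (x : nat -> R) (j : nat) (t : R) : nat -> R :=
  fun k => if Nat.eqb k j then t else x k.

Definition dpsi (d : nat) (x : nat -> R) (i j : nat) : R :=
  Derive (fun t => psi d (upd x j t) i) (x j).

(* (D psi_x y)_i = sum_{j>=1} d psi_i/d x_j (x) y_j ; only |i-j|<=1 terms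
   can be nonzero, so the sum is written over j in {i-1,i,i+1}, j >= 1. *)
Definition Dpsi (d : nat) (x y : nat -> R) (i : nat) : R :=
  (if (2 <=? i)%nat then dpsi d x i (i - 1) * y (i - 1)%nat else 0)
  + dpsi d x i i * y i + dpsi d x i (S i) * y (S i).

Definition sup_from (k : nat) (y : nat -> R) : Rbar :=
  Lub_Rbar (fun v => exists i : nat, (k <= i)%nat /\ v = Rabs (y i)).

Definition seqnorm (d : nat) (y : nat -> R) : Rbar :=
  if Nat.eqb d 2 then sup_from 1 y
  else Rbar_plus (Finite (Rabs (y 1%nat))) (sup_from 2 y).

Definition abc (d : nat) : R * R * R :=
  match d return R * R * R with
  | 2%nat => (5/10, 7/10, 27/100)
  | 3%nat => (4/10, 6/10, 2/10)
  | 4%nat => (3/10, 5/10, 1/10)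
  | 5%nat => (3/10, 4/10, 1/10)
  | 6%nat => (27/100, 32/100, 1/10)
  | _ => (26/100, 27/100, 1/100)
  end.

(* Main.v *)
Require Import Defs.
From Stdlib Require Import Reals Lra Psatz Lia.
From Coquelicot Require Import Coquelicot.
Open Scope R_scope.
Definition hh x1 x2 := (1+x1+x1*x2)/(1+2*x1).
Definition A11 d x1 x2 := INR d * hh x1 x2 ^ (d-1) * ((x2-1)/(1+2*x1)^2).
Definition A12 d x1 x2 := INR d * hh x1 x2 ^ (d-1) * (x1/(1+2*x1)).
Definition NN q r := 1+q+q*r.
Definition DD p q := 1+p+p*q.
Definition gg p q r := p*(NN q r/DD p q).
Definition Ap d p q r := INR d * gg p q r ^(d-1) * (NN q r / DD p q ^2).
Definition Aq d p q r := INR d * gg p q r ^(d-1) * (p*(1+r+p*r)/DD p q^2).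
Definition Ar d p q r := INR d * gg p q r ^(d-1) * (p*q/DD p q).

Definition Hu l1 u2 := (1+l1+l1*u2)/(1+2*l1).
Definition B11 (d:nat) (l1 u1 l2 u2 : R) := INR d * Hu l1 u2 ^(d-1) * ((1-l2)/(1+2*l1)^2).
Definition B12 (d:nat) (l1 u1 l2 u2 : R) := INR d * Hu l1 u2 ^(d-1) * (u1/(1+2*u1)).
Definition Gu lp up lq uq ur := up*(NN uq ur/DD lp lq).
Definition Bp (d:nat) (lp up lq uq lr ur : R) := INR d * Gu lp up lq uq ur ^(d-1) * (NN uq ur / DD lp lq ^2).
Definition Bq (d:nat) (lp up lq uq lr ur : R) := INR d * Gu lp up lq uq ur ^(d-1) * (up*(1+ur+up*ur)/DD lp lq^2).
Definition Br (d:nat) (lp up lq uq lr ur : R) := INR d * Gu lp up lq uq ur ^(d-1) * (up*uq/DD lp lq).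

Lemma frac_le a b c e : 0 <= a <= c -> 0 < e <= b -> a/b <= c/e.
Proof.
  intros [Ha Hac] [He Heb]. unfold Rdiv. apply Rmult_le_compat; try lra.
  - left; apply Rinv_0_lt_compat; lra.
  - apply Rinv_le_contravar; lra.
Qed.
Lemma frac_nn a b : 0 <= a -> 0 < b -> 0 <= a/b.
Proof. intros; unfold Rdiv; apply Rmult_le_pos; [lra| left; apply Rinv_0_lt_compat; lra]. Qed.

Lemma hh_bnd l1 x1 x2 u2 : 0<=l1<=x1 -> 0<=x2<=u2 -> u2<=1 -> 0 <= hh x1 x2 <= Hu l1 u2.
Proof.
  intros H1 H2 H3. unfold hh, Hu. split.
  - apply frac_nn; nra.
  - assert (E1: hh x1 x2 = (1+x1+x1*x2)*(1+2*l1)/((1+2*x1)*(1+2*l1))) by (unfold hh; field; lra).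
    assert (E2: Hu l1 u2 = (1+l1+l1*u2)*(1+2*x1)/((1+2*x1)*(1+2*l1))) by (unfold Hu; field; lra).
    unfold hh, Hu in E1, E2. rewrite E1, E2. unfold Rdiv. apply Rmult_le_compat_r.
    + left; apply Rinv_0_lt_compat; nra.
    + assert (0 <= (x1-l1)*(1-u2)) by nra. assert (0 <= x1*(u2-x2)) by nra.
      assert (0 <= l1*x1*(u2-x2)) by (apply Rmult_le_pos; nra). nra.
Qed.

Lemma absA11_bnd d l1 u1 l2 u2 x1 x2 : 0<=l1<=x1 -> x1<=u1 -> 0<=l2<=x2 -> x2<=u2 -> u2<=1 ->
  Rabs (A11 d x1 x2) <= B11 d l1 u1 l2 u2.
Proof.
  intros H1 H1' H2 H2' H3. destruct (hh_bnd l1 x1 x2 u2) as [Hh0 Hh1]; try lra.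
  assert (Hp: 0 < (1+2*x1)^2) by (apply pow_lt; lra).
  rewrite Rabs_left1.
  2:{ unfold A11. assert (0 <= INR d * hh x1 x2 ^ (d-1)) by (apply Rmult_le_pos; [apply pos_INR|apply pow_le; lra]).
      assert ((x2-1)/(1+2*x1)^2 <= 0).
      { unfold Rdiv. assert (0 < / (1+2*x1)^2) by (apply Rinv_0_lt_compat; lra). nra. }
      nra. }
  replace (- A11 d x1 x2) with (INR d * hh x1 x2 ^ (d-1) * ((1-x2)/(1+2*x1)^2)) by (unfold A11, Rdiv; ring).
  unfold B11. apply Rmult_le_compat.
  - apply Rmult_le_pos; [apply pos_INR|apply pow_le; lra].
  - apply frac_nn; lra.
  - apply Rmult_le_compat_l; [apply pos_INR|]. apply pow_incr; lra.
  - apply frac_le; [lra|]. split; [apply pow_lt; lra|]. apply pow_incr; lra.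
Qed.

Lemma A11_nonpos d x1 x2 : 0<=x1 -> 0<=x2<=1 -> A11 d x1 x2 <= 0.
Proof.
  intros. unfold A11. assert (0 <= hh x1 x2) by (unfold hh; apply frac_nn; nra).
  assert (0 <= INR d * hh x1 x2 ^ (d-1)) by (apply Rmult_le_pos; [apply pos_INR|apply pow_le; lra]).
  assert ((x2-1)/(1+2*x1)^2 <= 0).
  { unfold Rdiv. assert (0 < / (1+2*x1)^2) by (apply Rinv_0_lt_compat; apply pow_lt; lra). nra. }
  nra.
Qed.

Lemma A12_bnd d l1 u1 l2 u2 x1 x2 : 0<=l1<=x1 -> x1<=u1 -> 0<=l2<=x2 -> x2<=u2 -> u2<=1 ->
  0 <= A12 d x1 x2 <= B12 d l1 u1 l2 u2.
Proof.
  intros H1 H1' H2 H2' H3. destruct (hh_bnd l1 x1 x2 u2) as [Hh0 Hh1]; try lra.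
  unfold A12, B12. split.
  - apply Rmult_le_pos; [apply Rmult_le_pos; [apply pos_INR|apply pow_le; lra]|apply frac_nn; lra].
  - apply Rmult_le_compat.
    + apply Rmult_le_pos; [apply pos_INR|apply pow_le; lra].
    + apply frac_nn; lra.
    + apply Rmult_le_compat_l; [apply pos_INR|]. apply pow_incr; lra.
    + assert (E1: x1/(1+2*x1) = x1*(1+2*u1)/((1+2*x1)*(1+2*u1))) by (field; lra).
      assert (E2: u1/(1+2*u1) = u1*(1+2*x1)/((1+2*x1)*(1+2*u1))) by (field; lra).
      rewrite E1, E2. unfold Rdiv. apply Rmult_le_compat_r.
      * left; apply Rinv_0_lt_compat; nra.
      * nra.
Qed.

Section Row.
Variables (d : nat) (lp up lq uq lr ur p q r : R).
Hypotheses (Hp : 0<=lp<=p) (Hp' : p<=up) (Hq : 0<=lq<=q) (Hq' : q<=uq) (Hr : 0<=lr<=r) (Hr' : r<=ur).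

Let N0 : 0 < NN q r. Proof. unfold NN; nra. Qed.
Let NU : NN q r <= NN uq ur. Proof. unfold NN. assert (q*r <= uq*ur) by (apply Rmult_le_compat; lra). lra. Qed.
Let D0 : 0 < DD lp lq. Proof. unfold DD; nra. Qed.
Let DL : DD lp lq <= DD p q. Proof. unfold DD. assert (lp*lq <= p*q) by (apply Rmult_le_compat; lra). lra. Qed.
Let G0 : 0 <= gg p q r. Proof. unfold gg. apply Rmult_le_pos; [lra|apply frac_nn; lra]. Qed.
Let GU : gg p q r <= Gu lp up lq uq ur.
Proof. unfold gg, Gu. apply Rmult_le_compat; try lra. apply frac_nn; lra. apply frac_le; lra. Qed.
Let C0 : 0 <= INR d * gg p q r ^ (d-1).
Proof. apply Rmult_le_pos; [apply pos_INR|apply pow_le; lra]. Qed.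
Let CU : INR d * gg p q r ^ (d-1) <= INR d * Gu lp up lq uq ur ^ (d-1).
Proof. apply Rmult_le_compat_l; [apply pos_INR|]. apply pow_incr; lra. Qed.
Let D2 : 0 < DD lp lq ^ 2 <= DD p q ^ 2.
Proof. split; [apply pow_lt; lra| apply pow_incr; lra]. Qed.

Lemma Ap_bnd : 0 <= Ap d p q r <= Bp d lp up lq uq lr ur.
Proof.
  unfold Ap, Bp. split.
  - apply Rmult_le_pos; [lra|apply frac_nn; lra].
  - apply Rmult_le_compat; try lra. apply frac_nn; lra. apply frac_le; lra.
Qed.
Lemma Aq_bnd : 0 <= Aq d p q r <= Bq d lp up lq uq lr ur.
Proof.
  assert (0 <= p*(1+r+p*r)) by (apply Rmult_le_pos; nra).
  assert (p*(1+r+p*r) <= up*(1+ur+up*ur)).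
  { assert (p*r <= up*ur) by (apply Rmult_le_compat; lra). apply Rmult_le_compat; nra. }
  unfold Aq, Bq. split.
  - apply Rmult_le_pos; [lra|apply frac_nn; lra].
  - apply Rmult_le_compat; try lra. apply frac_nn; lra. apply frac_le; lra.
Qed.
Lemma Ar_bnd : 0 <= Ar d p q r <= Br d lp up lq uq lr ur.
Proof.
  assert (0 <= p*q) by (apply Rmult_le_pos; nra).
  assert (p*q <= up*uq) by (apply Rmult_le_compat; lra).
  unfold Ar, Br. split.
  - apply Rmult_le_pos; [lra|apply frac_nn; lra].
  - apply Rmult_le_compat; try lra. apply frac_nn; lra. apply frac_le; lra.
Qed.
End Row.

Definition Box3 (f : R -> R -> R -> R) (V l1 u1 l2 u2 l3 u3 : R) : Prop :=
  forall x1 x2 x3, l1<=x1<=u1 -> l2<=x2<=u2 -> l3<=x3<=u3 -> f x1 x2 x3 <= V.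

Lemma split1 m {f V l1 u1 l2 u2 l3 u3} : Box3 f V l1 m l2 u2 l3 u3 -> Box3 f V m u1 l2 u2 l3 u3 -> Box3 f V l1 u1 l2 u2 l3 u3.
Proof. intros A B x1 x2 x3 H1 H2 H3. destruct (Rle_dec x1 m); [apply A|apply B]; auto; lra. Qed.
Lemma split2 m {f V l1 u1 l2 u2 l3 u3} : Box3 f V l1 u1 l2 m l3 u3 -> Box3 f V l1 u1 m u2 l3 u3 -> Box3 f V l1 u1 l2 u2 l3 u3.
Proof. intros A B x1 x2 x3 H1 H2 H3. destruct (Rle_dec x2 m); [apply A|apply B]; auto; lra. Qed.
Lemma split3 m {f V l1 u1 l2 u2 l3 u3} : Box3 f V l1 u1 l2 u2 l3 m -> Box3 f V l1 u1 l2 u2 m u3 -> Box3 f V l1 u1 l2 u2 l3 u3.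
Proof. intros A B x1 x2 x3 H1 H2 H3. destruct (Rle_dec x3 m); [apply A|apply B]; auto; lra. Qed.

Lemma leaf1 d V l1 u1 l2 u2 l3 u3 : 0<=l1 -> 0<=l2 -> u2<=1 -> B11 d l1 u1 l2 u2 + B12 d l1 u1 l2 u2 <= V ->
  Box3 (fun x1 x2 _ => Rabs (A11 d x1 x2) + A12 d x1 x2) V l1 u1 l2 u2 l3 u3.
Proof.
  intros. intros x1 x2 x3 Y1 Y2 Y3.

  assert (Rabs (A11 d x1 x2) <= B11 d l1 u1 l2 u2) by (apply absA11_bnd; lra).
  assert (A12 d x1 x2 <= B12 d l1 u1 l2 u2) by (apply A12_bnd; lra). lra.
Qed.
Lemma leaf2 d V l1 u1 l2 u2 l3 u3 : 0<=l1 -> 0<=l2 -> 0<=l3 ->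
  Bp d l1 u1 l2 u2 l3 u3 + Bq d l1 u1 l2 u2 l3 u3 + Br d l1 u1 l2 u2 l3 u3 <= V ->
  Box3 (fun p q r => Ap d p q r + Aq d p q r + Ar d p q r) V l1 u1 l2 u2 l3 u3.
Proof.
  intros. intros x1 x2 x3 Y1 Y2 Y3.
  destruct (Ap_bnd d l1 u1 l2 u2 l3 u3 x1 x2 x3); try lra.
  destruct (Aq_bnd d l1 u1 l2 u2 l3 u3 x1 x2 x3); try lra.
  destruct (Ar_bnd d l1 u1 l2 u2 l3 u3 x1 x2 x3); try lra.
Qed.
Lemma leaf3 d V l1 u1 l2 u2 l3 u3 : 0<=l1 -> 0<=l2 -> 0<=l3 -> u2<=1 ->
  B11 d l1 u1 l2 u2 + Bp d l1 u1 l2 u2 l3 u3 <= V ->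
  Box3 (fun x1 x2 x3 => Rabs (A11 d x1 x2) + Ap d x1 x2 x3) V l1 u1 l2 u2 l3 u3.
Proof.
  intros. intros x1 x2 x3 Y1 Y2 Y3.
  assert (Rabs (A11 d x1 x2) <= B11 d l1 u1 l2 u2) by (apply absA11_bnd; lra).
  destruct (Ap_bnd d l1 u1 l2 u2 l3 u3 x1 x2 x3); try lra.
Qed.
Lemma leaf4 d V l1 u1 l2 u2 l3 u3 : 0<=l1 -> 0<=l2 -> 0<=l3 -> u2<=1 ->
  B12 d l1 u1 l2 u2 + Bq d l1 u1 l2 u2 l3 u3 + Br d l1 u1 l2 u2 l3 u3 <= V ->
  Box3 (fun x1 x2 x3 => A12 d x1 x2 + Aq d x1 x2 x3 + Ar d x1 x2 x3) V l1 u1 l2 u2 l3 u3.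
Proof.
  intros. intros x1 x2 x3 Y1 Y2 Y3.
  assert (A12 d x1 x2 <= B12 d l1 u1 l2 u2) by (apply A12_bnd; lra).
  destruct (Aq_bnd d l1 u1 l2 u2 l3 u3 x1 x2 x3); try lra.
  destruct (Ar_bnd d l1 u1 l2 u2 l3 u3 x1 x2 x3); try lra.
Qed.
Lemma leaf5 d V l1 u1 l2 u2 l3 u3 : 0<=l1 -> 0<=l2 -> u2<=1 -> B12 d l1 u1 l2 u2 <= V ->
  Box3 (fun x1 x2 _ => A12 d x1 x2) V l1 u1 l2 u2 l3 u3.
Proof.
  intros. intros x1 x2 x3 Y1 Y2 Y3.
  assert (A12 d x1 x2 <= B12 d l1 u1 l2 u2) by (apply A12_bnd; lra). lra.
Qed.

Ltac numcheck := unfold B11, B12, Bp, Bq, Br, Hu, Gu, NN, DD; simpl Nat.sub; simpl INR; simpl pow; lra.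
Ltac leafT := first [apply leaf1 | apply leaf2 | apply leaf3 | apply leaf4 | apply leaf5];
  first [lra | numcheck].
Lemma box_2_0 : Box3 (fun x1 x2 _ => Rabs (A11 2 x1 x2) + A12 2 x1 x2) (989/1000) (1/2) (7/10) 0 (27/100) 0 0.
Proof. leafT. Qed.

Lemma box_2_1 : Box3 (fun p q r => Ap 2 p q r + Aq 2 p q r + Ar 2 p q r) (989/1000) (1/2) (7/10) 0 (27/100) 0 (27/100).
Proof. apply (split1 (3/5)); [ apply (split2 (27/200)); [ leafT | apply (split1 (11/20)); [ leafT | leafT ] ] | apply (split2 (27/200)); [ leafT | apply (split1 (13/20)); [ leafT | leafT ] ] ]. Qed.

Lemma box_2_2 : Box3 (fun p q r => Ap 2 p q r + Aq 2 p q r + Ar 2 p q r) (989/1000) 0 (27/100) 0 (27/100) 0 (27/100).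
Proof. apply (split1 (27/200)); [ leafT | leafT ]. Qed.

Lemma box_3_0 : Box3 (fun x1 x2 x3 => Rabs (A11 3 x1 x2) + Ap 3 x1 x2 x3) (989/1000) (2/5) (3/5) 0 (1/5) 0 (1/5).
Proof. apply (split1 (1/2)); [ apply (split2 (1/10)); [ leafT | leafT ] | leafT ]. Qed.

Lemma box_3_1 : Box3 (fun x1 x2 x3 => A12 3 x1 x2 + Aq 3 x1 x2 x3 + Ar 3 x1 x2 x3) (989/1000) (2/5) (3/5) 0 (1/5) 0 (1/5).
Proof. leafT. Qed.

Lemma box_3_2 : Box3 (fun x1 x2 _ => A12 3 x1 x2) (277/500) (2/5) (3/5) 0 (1/5) 0 0.
Proof. leafT. Qed.

Lemma box_3_3 : Box3 (fun p q r => Ap 3 p q r + Aq 3 p q r + Ar 3 p q r) (87/200) 0 (1/5) 0 (1/5) 0 (1/5).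
Proof. leafT. Qed.

Lemma box_4_0 : Box3 (fun x1 x2 x3 => Rabs (A11 4 x1 x2) + Ap 4 x1 x2 x3) (989/1000) (3/10) (1/2) 0 (1/10) 0 (1/10).
Proof. apply (split1 (2/5)); [ apply (split2 (1/20)); [ leafT | leafT ] | leafT ]. Qed.

Lemma box_4_1 : Box3 (fun x1 x2 x3 => A12 4 x1 x2 + Aq 4 x1 x2 x3 + Ar 4 x1 x2 x3) (989/1000) (3/10) (1/2) 0 (1/10) 0 (1/10).
Proof. leafT. Qed.

Lemma box_4_2 : Box3 (fun x1 x2 _ => A12 4 x1 x2) (23/40) (3/10) (1/2) 0 (1/10) 0 0.
Proof. leafT. Qed.

Lemma box_4_3 : Box3 (fun p q r => Ap 4 p q r + Aq 4 p q r + Ar 4 p q r) (207/500) 0 (1/10) 0 (1/10) 0 (1/10).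
Proof. leafT. Qed.

Lemma box_5_0 : Box3 (fun x1 x2 x3 => Rabs (A11 5 x1 x2) + Ap 5 x1 x2 x3) (989/1000) (3/10) (2/5) 0 (1/10) 0 (1/10).
Proof. leafT. Qed.

Lemma box_5_1 : Box3 (fun x1 x2 x3 => A12 5 x1 x2 + Aq 5 x1 x2 x3 + Ar 5 x1 x2 x3) (989/1000) (3/10) (2/5) 0 (1/10) 0 (1/10).
Proof. leafT. Qed.

Lemma box_5_2 : Box3 (fun x1 x2 _ => A12 5 x1 x2) (531/1000) (3/10) (2/5) 0 (1/10) 0 0.
Proof. leafT. Qed.

Lemma box_5_3 : Box3 (fun p q r => Ap 5 p q r + Aq 5 p q r + Ar 5 p q r) (229/500) 0 (1/10) 0 (1/10) 0 (1/10).
Proof. leafT. Qed.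

Lemma box_6_0 : Box3 (fun x1 x2 x3 => Rabs (A11 6 x1 x2) + Ap 6 x1 x2 x3) (989/1000) (27/100) (8/25) 0 (1/10) 0 (1/10).
Proof. apply (split2 (1/20)); [ apply (split2 (1/40)); [ apply (split2 (1/80)); [ leafT | leafT ] | apply (split2 (3/80)); [ leafT | leafT ] ] | apply (split2 (3/40)); [ apply (split2 (1/16)); [ leafT | leafT ] | apply (split2 (7/80)); [ leafT | leafT ] ] ]. Qed.

Lemma box_6_1 : Box3 (fun x1 x2 x3 => A12 6 x1 x2 + Aq 6 x1 x2 x3 + Ar 6 x1 x2 x3) (989/1000) (27/100) (8/25) 0 (1/10) 0 (1/10).
Proof. leafT. Qed.

Lemma box_6_2 : Box3 (fun x1 x2 _ => A12 6 x1 x2) (497/1000) (27/100) (8/25) 0 (1/10) 0 0.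
Proof. leafT. Qed.

Lemma box_6_3 : Box3 (fun p q r => Ap 6 p q r + Aq 6 p q r + Ar 6 p q r) (123/250) 0 (1/10) 0 (1/10) 0 (1/10).
Proof. leafT. Qed.

Lemma box_7_0 : Box3 (fun x1 x2 x3 => Rabs (A11 7 x1 x2) + Ap 7 x1 x2 x3) (989/1000) (13/50) (27/100) 0 (1/100) 0 (1/100).
Proof. apply (split2 (1/200)); [ apply (split2 (1/400)); [ leafT | leafT ] | apply (split2 (3/400)); [ leafT | leafT ] ]. Qed.

Lemma box_7_1 : Box3 (fun x1 x2 x3 => A12 7 x1 x2 + Aq 7 x1 x2 x3 + Ar 7 x1 x2 x3) (989/1000) (13/50) (27/100) 0 (1/100) 0 (1/100).
Proof. leafT. Qed.

Lemma box_7_2 : Box3 (fun x1 x2 _ => A12 7 x1 x2) (101/250) (13/50) (27/100) 0 (1/100) 0 0.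
Proof. leafT. Qed.

Lemma box_7_3 : Box3 (fun p q r => Ap 7 p q r + Aq 7 p q r + Ar 7 p q r) (117/200) 0 (1/100) 0 (1/100) 0 (1/100).
Proof. leafT. Qed.

Lemma der11 d x1 x2 : (1<=d)%nat -> 0<=x1 ->
  is_derive (fun t => ((1+t+t*x2)/(1+2*t))^d) x1 (A11 d x1 x2).
Proof.
  intros Hd H1. auto_derive.
  - lra.
  - unfold A11, hh. replace (d-1)%nat with (pred d) by lia. unfold Rdiv.
    set (P := ((1 + x1 + x1 * x2) * / (1 + 2 * x1)) ^ pred d). field. lra.
Qed.
Lemma der12 d x1 x2 : (1<=d)%nat -> 0<=x1 ->
  is_derive (fun t => ((1+x1+x1*t)/(1+2*x1))^d) x2 (A12 d x1 x2).
Proof.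
  intros Hd H1. auto_derive.
  - lra.
  - unfold A12, hh. replace (d-1)%nat with (pred d) by lia. unfold Rdiv.
    set (P := ((1 + x1 + x1 * x2) * / (1 + 2 * x1)) ^ pred d). field. lra.
Qed.
Lemma derp d p q r : (1<=d)%nat -> 0<=p -> 0<=q ->
  is_derive (fun t => t^d * ((1+q+q*r)/(1+t+t*q))^d) p (Ap d p q r).
Proof.
  intros Hd H1 H2. assert (0 < 1+p+p*q) by nra. auto_derive.
  - lra.
  - unfold Ap, gg, NN, DD. destruct d as [|k]; [lia|]. simpl pred. replace (S k - 1)%nat with k by lia.
    simpl pow. rewrite (Rpow_mult_distr p).
    set (P := p^k). unfold Rdiv. set (Q := ((1 + q + q * r) * / (1 + p + p * q)) ^ k). field. lra.
Qed.
Lemma derq d p q r : (1<=d)%nat -> 0<=p -> 0<=q ->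
  is_derive (fun t => p^d * ((1+t+t*r)/(1+p+p*t))^d) q (Aq d p q r).
Proof.
  intros Hd H1 H2. assert (0 < 1+p+p*q) by nra. auto_derive.
  - lra.
  - unfold Aq, gg, NN, DD. destruct d as [|k]; [lia|]. simpl pred. replace (S k - 1)%nat with k by lia.
    simpl pow. rewrite (Rpow_mult_distr p).
    set (P := p^k). unfold Rdiv. set (Q := ((1 + q + q * r) * / (1 + p + p * q)) ^ k). field. lra.
Qed.
Lemma derr d p q r : (1<=d)%nat -> 0<=p -> 0<=q ->
  is_derive (fun t => p^d * ((1+q+q*t)/(1+p+p*q))^d) r (Ar d p q r).
Proof.
  intros Hd H1 H2. assert (0 < 1+p+p*q) by nra. auto_derive.
  - lra.
  - unfold Ar, gg, NN, DD. destruct d as [|k]; [lia|]. simpl pred. replace (S k - 1)%nat with k by lia.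
    simpl pow. rewrite (Rpow_mult_distr p).
    set (P := p^k). unfold Rdiv. set (Q := ((1 + q + q * r) * / (1 + p + p * q)) ^ k). field. lra.
Qed.

Ltac eqbs := repeat match goal with |- context [Nat.eqb ?a ?b] =>
  destruct (Nat.eqb_spec a b); [try (exfalso; lia) | try (exfalso; lia)] end.

Lemma dpsi11 d x : (1<=d)%nat -> 0 <= x 1%nat -> dpsi d x 1 1 = A11 d (x 1%nat) (x 2%nat).
Proof.
  intros Hd H. unfold dpsi.
  rewrite (Derive_ext _ (fun t => ((1+t+t*x 2%nat)/(1+2*t))^d)).
  - apply is_derive_unique, der11; auto.
  - intros t. reflexivity.
Qed.
Lemma dpsi12 d x : (1<=d)%nat -> 0 <= x 1%nat -> dpsi d x 1 2 = A12 d (x 1%nat) (x 2%nat).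
Proof.
  intros Hd H. unfold dpsi.
  rewrite (Derive_ext _ (fun t => ((1+x 1%nat+x 1%nat*t)/(1+2*x 1%nat))^d)).
  - apply is_derive_unique, der12; auto.
  - intros t. reflexivity.
Qed.
Lemma dpsinp d x m : (1<=d)%nat -> 0 <= x (S m) -> 0 <= x (S (S m)) ->
  dpsi d x (S (S m)) (S m) = Ap d (x (S m)) (x (S (S m))) (x (S (S (S m)))).
Proof.
  intros Hd H1 H2. unfold dpsi.
  rewrite (Derive_ext _ (fun t => t^d * ((1+x (S (S m))+x (S (S m))*x (S (S (S m))))/(1+t+t*x (S (S m))))^d)).
  - apply is_derive_unique, derp; auto.
  - intros t. unfold psi, upd. eqbs. reflexivity.
Qed.
Lemma dpsinq d x m : (1<=d)%nat -> 0 <= x (S m) -> 0 <= x (S (S m)) ->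
  dpsi d x (S (S m)) (S (S m)) = Aq d (x (S m)) (x (S (S m))) (x (S (S (S m)))).
Proof.
  intros Hd H1 H2. unfold dpsi.
  rewrite (Derive_ext _ (fun t => x (S m)^d * ((1+t+t*x (S (S (S m))))/(1+x (S m)+x (S m)*t))^d)).
  - apply is_derive_unique, derq; auto.
  - intros t. unfold psi, upd. eqbs. reflexivity.
Qed.
Lemma dpsinr d x m : (1<=d)%nat -> 0 <= x (S m) -> 0 <= x (S (S m)) ->
  dpsi d x (S (S m)) (S (S (S m))) = Ar d (x (S m)) (x (S (S m))) (x (S (S (S m)))).
Proof.
  intros Hd H1 H2. unfold dpsi.
  rewrite (Derive_ext _ (fun t => x (S m)^d * ((1+x (S (S m))+x (S (S m))*t)/(1+x (S m)+x (S m)*x (S (S m))))^d)).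
  - apply is_derive_unique, derr; auto.
  - intros t. unfold psi, upd. eqbs. reflexivity.
Qed.

Lemma Dpsi1 d x y : (1<=d)%nat -> 0 <= x 1%nat ->
  Dpsi d x y 1 = A11 d (x 1%nat) (x 2%nat) * y 1%nat + A12 d (x 1%nat) (x 2%nat) * y 2%nat.
Proof. intros. unfold Dpsi. rewrite dpsi11, dpsi12 by auto. simpl. ring. Qed.

Lemma Dpsin d x y m : (1<=d)%nat -> 0 <= x (S m) -> 0 <= x (S (S m)) ->
  Dpsi d x y (S (S m)) = Ap d (x (S m)) (x (S (S m))) (x (S (S (S m)))) * y (S m)
    + Aq d (x (S m)) (x (S (S m))) (x (S (S (S m)))) * y (S (S m))
    + Ar d (x (S m)) (x (S (S m))) (x (S (S (S m)))) * y (S (S (S m))).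
Proof.
  intros. unfold Dpsi. replace ((2 <=? S (S m))%nat) with true by reflexivity.
  replace (S (S m) - 1)%nat with (S m) by lia.
  rewrite dpsinp, dpsinq, dpsinr by auto. reflexivity.
Qed.

Lemma sup_ub k y i : (k<=i)%nat -> Rbar_le (Finite (Rabs (y i))) (sup_from k y).
Proof.
  intros Hi. unfold sup_from.
  destruct (Lub_Rbar_correct (fun v => exists i : nat, (k <= i)%nat /\ v = Rabs (y i))) as [Hub _].
  apply Hub. exists i; auto.
Qed.
Lemma sup_le k y M : (forall i, (k<=i)%nat -> Rabs (y i) <= M) -> Rbar_le (sup_from k y) (Finite M).
Proof.
  intros H. unfold sup_from.
  destruct (Lub_Rbar_correct (fun v => exists i : nat, (k <= i)%nat /\ v = Rabs (y i))) as [_ Hl].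
  apply Hl. intros v [i [Hi ->]]. simpl. apply H; auto.
Qed.

Lemma tri3 a b c u v w : 0<=a -> 0<=b -> 0<=c ->
  Rabs (a*u+b*v+c*w) <= a*Rabs u + b*Rabs v + c*Rabs w.
Proof.
  intros. eapply Rle_trans; [apply Rabs_triang|]. apply Rplus_le_compat.
  - eapply Rle_trans; [apply Rabs_triang|]. rewrite !Rabs_mult, (Rabs_pos_eq a), (Rabs_pos_eq b) by auto. lra.
  - rewrite Rabs_mult, (Rabs_pos_eq c) by auto. lra.
Qed.
Lemma tri2 a b u v : Rabs (a*u+b*v) <= Rabs a*Rabs u + Rabs b*Rabs v.
Proof. eapply Rle_trans; [apply Rabs_triang|]. rewrite !Rabs_mult. lra. Qed.

Definition R0 := 989/1000.

Lemma A_nonneg d p q r : 0<=p -> 0<=q -> 0<=r ->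
  0 <= Ap d p q r /\ 0 <= Aq d p q r /\ 0 <= Ar d p q r.
Proof.
  intros. destruct (Ap_bnd d p p q q r r p q r); try lra.
  destruct (Aq_bnd d p p q q r r p q r); try lra.
  destruct (Ar_bnd d p p q q r r p q r); try lra.
Qed.

Lemma row1b d x y s : (1<=d)%nat -> 0<=x 1%nat -> 0<=x 2%nat<=1 -> Rabs (y 2%nat) <= s ->
  Rabs (Dpsi d x y 1) <= Rabs (A11 d (x 1%nat) (x 2%nat)) * Rabs (y 1%nat) + A12 d (x 1%nat) (x 2%nat) * s.
Proof.
  intros Hd H1 H2 Hs. rewrite Dpsi1 by auto.
  destruct (A12_bnd d (x 1%nat) (x 1%nat) (x 2%nat) (x 2%nat) (x 1%nat) (x 2%nat)) as [H0 _]; try lra.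
  eapply Rle_trans; [apply tri2|]. rewrite (Rabs_pos_eq (A12 _ _ _)) by auto.
  assert (A12 d (x 1%nat) (x 2%nat) * Rabs (y 2%nat) <= A12 d (x 1%nat) (x 2%nat) * s) by (apply Rmult_le_compat_l; auto).
  lra.
Qed.

Lemma rowb d x y m s : (1<=d)%nat -> 0<=x (S m) -> 0<=x (S (S m)) -> 0<=x (S (S (S m))) ->
  Rabs (y (S (S m))) <= s -> Rabs (y (S (S (S m)))) <= s ->
  Rabs (Dpsi d x y (S (S m))) <=
    Ap d (x (S m)) (x (S (S m))) (x (S (S (S m)))) * Rabs (y (S m)) +
    (Aq d (x (S m)) (x (S (S m))) (x (S (S (S m)))) + Ar d (x (S m)) (x (S (S m))) (x (S (S (S m))))) * s.
Proof.
  intros Hd H1 H2 H3 Hs1 Hs2. rewrite Dpsin by auto.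
  destruct (A_nonneg d (x (S m)) (x (S (S m))) (x (S (S (S m))))) as [N1 [N2 N3]]; auto.
  eapply Rle_trans; [apply tri3; auto|].
  assert (Aq d (x (S m)) (x (S (S m))) (x (S (S (S m)))) * Rabs (y (S (S m))) <= Aq d (x (S m)) (x (S (S m))) (x (S (S (S m)))) * s) by (apply Rmult_le_compat_l; auto).
  assert (Ar d (x (S m)) (x (S (S m))) (x (S (S (S m)))) * Rabs (y (S (S (S m)))) <= Ar d (x (S m)) (x (S (S m))) (x (S (S (S m)))) * s) by (apply Rmult_le_compat_l; auto).
  lra.
Qed.

Lemma main2 d a b c : (1<=d)%nat -> 0<=a -> 0<=c -> c<=1 ->
  Box3 (fun x1 x2 _ => Rabs (A11 d x1 x2) + A12 d x1 x2) R0 a b 0 c 0 0 ->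
  Box3 (fun p q r => Ap d p q r + Aq d p q r + Ar d p q r) R0 a b 0 c 0 c ->
  Box3 (fun p q r => Ap d p q r + Aq d p q r + Ar d p q r) R0 0 c 0 c 0 c ->
  forall x, a <= x 1%nat <= b -> (forall n, (2<=n)%nat -> 0<=x n<=c) ->
  forall y, sup_from 1 y = Finite 1 -> Rbar_le (sup_from 1 (Dpsi d x y)) (Finite R0).
Proof.
  intros Hd Ha Hc Hc1 B1 B2 B3 x Hx1 Hxn y Hy.
  assert (Hyj: forall j, (1<=j)%nat -> Rabs (y j) <= 1).
  { intros j Hj. pose proof (sup_ub 1 y j Hj) as E. rewrite Hy in E. exact E. }
  assert (X2 := Hxn 2%nat ltac:(lia)).
  apply sup_le. intros i Hi. destruct i as [|[|m]]; [lia| |].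
  - eapply Rle_trans; [apply (row1b d x y 1); auto; try lra; apply Hyj; lia|].
    assert (Rabs (A11 d (x 1%nat) (x 2%nat)) * Rabs (y 1%nat) <= Rabs (A11 d (x 1%nat) (x 2%nat)) * 1)
      by (apply Rmult_le_compat_l; [apply Rabs_pos| apply Hyj; lia]).
    assert (Rabs (A11 d (x 1%nat) (x 2%nat)) + A12 d (x 1%nat) (x 2%nat) <= R0) by (apply (B1 _ _ 0); lra).
    lra.
  - assert (P1: 0 <= x (S m) /\ (m = 0%nat -> a <= x (S m) <= b) /\ ((1<=m)%nat -> x (S m) <= c)).
    { destruct m as [|m]; [split; [lra|split; [intros; lra|lia]]|].
      pose proof (Hxn (S (S m)) ltac:(lia)). split; [lra|split; [lia|intros; lra]]. }
    destruct P1 as [P1 [P1a P1b]].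
    pose proof (Hxn (S (S m)) ltac:(lia)). pose proof (Hxn (S (S (S m))) ltac:(lia)).
    eapply Rle_trans; [apply (rowb d x y m 1); auto; try lra; apply Hyj; lia|].
    destruct (A_nonneg d (x (S m)) (x (S (S m))) (x (S (S (S m))))) as [N1 [N2 N3]]; try lra.
    assert (Ap d (x (S m)) (x (S (S m))) (x (S (S (S m)))) * Rabs (y (S m)) <= Ap d (x (S m)) (x (S (S m))) (x (S (S (S m)))) * 1)
      by (apply Rmult_le_compat_l; [auto| apply Hyj; lia]).
    assert (Ap d (x (S m)) (x (S (S m))) (x (S (S (S m)))) + Aq d (x (S m)) (x (S (S m))) (x (S (S (S m)))) + Ar d (x (S m)) (x (S (S m))) (x (S (S (S m)))) <= R0).
    { destruct m as [|m]; [apply B2; auto; lra| apply B3; try lra]. pose proof (P1b ltac:(lia)). lra. }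
    lra.
Qed.

Lemma main3 d a b c M1 V2 : (1<=d)%nat -> 0<=a -> 0<=c -> c<=1 -> M1 + V2 <= R0 ->
  Box3 (fun x1 x2 x3 => Rabs (A11 d x1 x2) + Ap d x1 x2 x3) R0 a b 0 c 0 c ->
  Box3 (fun x1 x2 x3 => A12 d x1 x2 + Aq d x1 x2 x3 + Ar d x1 x2 x3) R0 a b 0 c 0 c ->
  Box3 (fun x1 x2 _ => A12 d x1 x2) M1 a b 0 c 0 0 ->
  Box3 (fun p q r => Ap d p q r + Aq d p q r + Ar d p q r) V2 0 c 0 c 0 c ->
  forall x, a <= x 1%nat <= b -> (forall n, (2<=n)%nat -> 0<=x n<=c) ->
  forall y, Rbar_plus (Finite (Rabs (y 1%nat))) (sup_from 2 y) = Finite 1 ->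
  Rbar_le (Rbar_plus (Finite (Rabs (Dpsi d x y 1))) (sup_from 2 (Dpsi d x y))) (Finite R0).
Proof.
  intros Hd Ha Hc Hc1 HMV B3 B4 B5 B2 x Hx1 Hxn y Hy.
  destruct (sup_from 2 y) as [s| |] eqn:Es; simpl in Hy; try discriminate.
  injection Hy as Hus.
  assert (Hys: forall j, (2<=j)%nat -> Rabs (y j) <= s).
  { intros j Hj. pose proof (sup_ub 2 y j Hj) as E. rewrite Es in E. exact E. }
  assert (Hs0: 0 <= s) by (pose proof (Hys 2%nat ltac:(lia)); pose proof (Rabs_pos (y 2%nat)); lra).
  pose proof (Rabs_pos (y 1%nat)) as Hu0.
  assert (X2 := Hxn 2%nat ltac:(lia)). assert (X3 := Hxn 3%nat ltac:(lia)).
  assert (F3: Rabs (A11 d (x 1%nat) (x 2%nat)) + Ap d (x 1%nat) (x 2%nat) (x 3%nat) <= R0) by (apply B3; lra).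
  assert (F4: A12 d (x 1%nat) (x 2%nat) + Aq d (x 1%nat) (x 2%nat) (x 3%nat) + Ar d (x 1%nat) (x 2%nat) (x 3%nat) <= R0) by (apply B4; lra).
  assert (F5: A12 d (x 1%nat) (x 2%nat) <= M1) by (apply (B5 _ _ 0); lra).
  destruct (A_nonneg d (x 1%nat) (x 2%nat) (x 3%nat)) as [N1 [N2 N3]]; try lra.
  assert (H1: Rabs (Dpsi d x y 1) <= Rabs (A11 d (x 1%nat) (x 2%nat)) * Rabs (y 1%nat) + A12 d (x 1%nat) (x 2%nat) * s)
    by (apply row1b; [auto| lra | lra | apply Hys; lia]).
  assert (Hsup: Rbar_le (sup_from 2 (Dpsi d x y)) (Finite (R0 - Rabs (Dpsi d x y 1)))).
  { apply sup_le. intros i Hi. destruct i as [|[|m]]; try lia. destruct m as [|m].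
    - assert (HD2: Rabs (Dpsi d x y 2) <= Ap d (x 1%nat) (x 2%nat) (x 3%nat) * Rabs (y 1%nat) + (Aq d (x 1%nat) (x 2%nat) (x 3%nat) + Ar d (x 1%nat) (x 2%nat) (x 3%nat)) * s)
        by (apply (rowb d x y 0 s); auto; try lra; apply Hys; lia).
      assert ((Rabs (A11 d (x 1%nat) (x 2%nat)) + Ap d (x 1%nat) (x 2%nat) (x 3%nat)) * Rabs (y 1%nat) <= R0 * Rabs (y 1%nat))
        by (apply Rmult_le_compat_r; lra).
      assert ((A12 d (x 1%nat) (x 2%nat) + Aq d (x 1%nat) (x 2%nat) (x 3%nat) + Ar d (x 1%nat) (x 2%nat) (x 3%nat)) * s <= R0 * s)
        by (apply Rmult_le_compat_r; lra).
      assert (R0 * Rabs (y 1%nat) + R0 * s = R0) by (rewrite <- Rmult_plus_distr_l, Hus; ring).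
      lra.
    - pose proof (Hxn (S (S m)) ltac:(lia)). pose proof (Hxn (S (S (S m))) ltac:(lia)).
      pose proof (Hxn (S (S (S (S m)))) ltac:(lia)).
      assert (HD2: Rabs (Dpsi d x y (S (S (S m)))) <= Ap d (x (S (S m))) (x (S (S (S m)))) (x (S (S (S (S m))))) * Rabs (y (S (S m))) + (Aq d (x (S (S m))) (x (S (S (S m)))) (x (S (S (S (S m))))) + Ar d (x (S (S m))) (x (S (S (S m)))) (x (S (S (S (S m)))))) * s)
        by (apply (rowb d x y (S m) s); auto; try lra; apply Hys; lia).
      destruct (A_nonneg d (x (S (S m))) (x (S (S (S m)))) (x (S (S (S (S m)))))) as [M1' [M2' M3']]; try lra.
      assert (Ap d (x (S (S m))) (x (S (S (S m)))) (x (S (S (S (S m))))) * Rabs (y (S (S m))) <= Ap d (x (S (S m))) (x (S (S (S m)))) (x (S (S (S (S m))))) * s)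
        by (apply Rmult_le_compat_l; [auto| apply Hys; lia]).
      assert (Ap d (x (S (S m))) (x (S (S (S m)))) (x (S (S (S (S m))))) + Aq d (x (S (S m))) (x (S (S (S m)))) (x (S (S (S (S m))))) + Ar d (x (S (S m))) (x (S (S (S m)))) (x (S (S (S (S m))))) <= V2)
        by (apply B2; lra).
      assert ((Ap d (x (S (S m))) (x (S (S (S m)))) (x (S (S (S (S m))))) + Aq d (x (S (S m))) (x (S (S (S m)))) (x (S (S (S (S m))))) + Ar d (x (S (S m))) (x (S (S (S m)))) (x (S (S (S (S m)))))) * s <= V2 * s)
        by (apply Rmult_le_compat_r; lra).
      assert (Rabs (A11 d (x 1%nat) (x 2%nat)) * Rabs (y 1%nat) <= R0 * Rabs (y 1%nat)) by (apply Rmult_le_compat_r; lra).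
      assert (A12 d (x 1%nat) (x 2%nat) * s <= M1 * s) by (apply Rmult_le_compat_r; lra).
      assert ((M1 + V2) * s <= R0 * s) by (apply Rmult_le_compat_r; lra).
      assert (R0 * Rabs (y 1%nat) + R0 * s = R0) by (rewrite <- Rmult_plus_distr_l, Hus; ring).
      lra. }
  destruct (sup_from 2 (Dpsi d x y)) as [t| |]; simpl in Hsup |- *; try lra; auto.
Qed.


Theorem proposition2p9 :
  forall d : nat, (2 <= d <= 7)%nat ->
  forall x : nat -> R,
    in_S (fst (fst (abc d))) (snd (fst (abc d))) (snd (abc d)) x ->
    exists r : R, r < 99/100 /\
      forall y : nat -> R, seqnorm d y = Finite 1 ->
        Rbar_le (seqnorm d (Dpsi d x y)) (Finite r).
Proof.
  intros d Hd x [_ [Hx1 Hxn]]. exists R0. split; [unfold R0; lra|]. intros y Hy.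
  assert (HD: d = 2%nat \/ d = 3%nat \/ d = 4%nat \/ d = 5%nat \/ d = 6%nat \/ d = 7%nat) by lia.
  destruct HD as [ -> | [ -> | [ -> | [ -> | [ -> | -> ]]]]]; cbn [abc fst snd] in Hx1, Hxn;
    unfold seqnorm in Hy |- *; cbn [Nat.eqb] in Hy |- *.
  - eapply (main2 _ _ _ _ _ _ _ _ box_2_0 box_2_1 box_2_2); try lia; try (unfold R0; lra); try (intros n Hn; specialize (Hxn n Hn); lra); try exact Hy; try assumption.
  - eapply (main3 _ _ _ _ _ _ _ _ _ _ _ box_3_0 box_3_1 box_3_2 box_3_3); try lia; try (unfold R0; lra); try (intros n Hn; specialize (Hxn n Hn); lra); try exact Hy; try assumption.
  - eapply (main3 _ _ _ _ _ _ _ _ _ _ _ box_4_0 box_4_1 box_4_2 box_4_3); try lia; try (unfold R0; lra); try (intros n Hn; specialize (Hxn n Hn); lra); try exact Hy; try assumption.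
  - eapply (main3 _ _ _ _ _ _ _ _ _ _ _ box_5_0 box_5_1 box_5_2 box_5_3); try lia; try (unfold R0; lra); try (intros n Hn; specialize (Hxn n Hn); lra); try exact Hy; try assumption.
  - eapply (main3 _ _ _ _ _ _ _ _ _ _ _ box_6_0 box_6_1 box_6_2 box_6_3); try lia; try (unfold R0; lra); try (intros n Hn; specialize (Hxn n Hn); lra); try exact Hy; try assumption.
  - eapply (main3 _ _ _ _ _ _ _ _ _ _ _ box_7_0 box_7_1 box_7_2 box_7_3); try lia; try (unfold R0; lra); try (intros n Hn; specialize (Hxn n Hn); lra); try exact Hy; try assumption.
  Unshelve. all: first [lia | unfold R0; lra].
Qed.
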